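(* Consider the DSA algorithm described in the context, under conditions (a)–(c) on the weights and assuming every $f_{n,i}$ is differentiable and $\mu$-strongly convex with $L$-Lipschitz gradient. Then for any constant $\eta>0$ and every $t\ge0$, \begin{align*} \mathbb{E}\left[\|\mathbf{u}^{t+1}-\mathbf{u}^*\|_{\mathbf{G}}^2\mid\mathcal{F}^t\right]&\le\|\mathbf{u}^t-\mathbf{u}^*\|_{\mathbf{G}}^2-2\,\mathbb{E}\left[\|\mathbf{x}^{t+1}-\mathbf{x}^*\|_{\mathbf{I}+\mathbf{Z}-2\tilde{\mathbf{Z}}}^2\mid\mathcal{F}^t\right]+\frac{4\alpha L}{\eta}p^t\\ &\quad-\mathbb{E}\left[\|\mathbf{x}^{t+1}-\mathbf{x}^t\|_{\tilde{\mathbf{Z}}-2\alpha\eta\mathbf{I}}^2\mid\mathcal{F}^t\right]-\mathbb{E}\left[\|\mathbf{v}^{t+1}-\mathbf{v}^t\|^2\mid\mathcal{F}^t\right]\\ &\quad-\left(\frac{4\alpha\mu}{L}-\frac{2\alpha(2L-\mu)}{\eta}\right)\left(f(\mathbf{x}^{t})-f(\mathbf{x}^* )-\nabla f(\mathbf{x}^* )^T(\mathbf{x}^{t}-\mathbf{x}^* )\right). \end{align*}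
   Context: Problem: a connected network of $N$ nodes; node $n$ holds $q_n$ functions $f_{n,i}:\mathbb{R}^p\to\mathbb{R}$, each differentiable, $\mu$-strongly convex, with $L$-Lipschitz gradient; $f_n:=\frac1{q_n}\sum_i f_{n,i}$, $\tilde{\mathbf{x}}^*:=\arg\min_{\mathbf{x}}\sum_n f_n(\mathbf{x})$. For $\mathbf{x}=[\mathbf{x}_1;\dots;\mathbf{x}_N]\in\mathbb{R}^{Np}$, $f(\mathbf{x}):=\sum_n f_n(\mathbf{x}_n)$, $\mathbf{x}^*:=[\tilde{\mathbf{x}}^*;\dots;\tilde{\mathbf{x}}^*]$. Weights: $\mathbf{W},\tilde{\mathbf{W}}\in\mathbb{R}^{N\times N}$ with entries nonzero only for $m=n$ or $m$ a neighbor of $n$, satisfying (a) symmetry; (b) $\mathrm{null}(\mathbf{I}-\tilde{\mathbf{W}})\supseteq\mathrm{span}(\mathbf{1})$, $\mathrm{null}(\mathbf{I}-\mathbf{W})=\mathrm{span}(\mathbf{1})$, $\mathrm{null}(\tilde{\mathbf{W}}-\mathbf{W})=\mathrm{span}(\mathbf{1})$; (c) $\mathbf{W}\preceq\tilde{\mathbf{W}}\preceq(\mathbf{I}+\mathbf{W})/2$, $\tilde{\mathbf{W}}\succ0$. $\mathbf{Z}:=\mathbf{W}\otimes\mathbf{I}_p$, $\tilde{\mathbf{Z}}:=\tilde{\mathbf{W}}\otimes\mathbf{I}_p$, $\mathbf{U}:=(\tilde{\mathbf{Z}}-\mathbf{Z})^{1/2}$. DSA: stepsize $\alpha>0$, initial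 $\mathbf{x}_n^0$, $\mathbf{y}_{n,i}^0=\mathbf{x}_n^0$. At each $t\ge0$ node $n$ draws $i_n^t$ uniformly from $\{1,\dots,q_n\}$ independently of the past, sets $\hat{\mathbf{g}}_n^t:=\nabla f_{n,i_n^t}(\mathbf{x}_n^t)-\nabla f_{n,i_n^t}(\mathbf{y}_{n,i_n^t}^t)+\frac1{q_n}\sum_{i}\nabla f_{n,i}(\mathbf{y}_{n,i}^t)$, and $\mathbf{y}_{n,i}^{t+1}=\mathbf{x}_n^t$ if $i=i_n^t$, else $\mathbf{y}_{n,i}^{t+1}=\mathbf{y}_{n,i}^t$. With $\hat{\mathbf{g}}^t:=[\hat{\mathbf{g}}_1^t;\dots;\hat{\mathbf{g}}_N^t]$: $\mathbf{x}^1=\mathbf{Z}\mathbf{x}^0-\alpha\hat{\mathbf{g}}^0$, $\mathbf{x}^{t+1}=(\mathbf{I}+\mathbf{Z})\mathbf{x}^t-\tilde{\mathbf{Z}}\mathbf{x}^{t-1}-\alpha[\hat{\mathbf{g}}^t-\hat{\mathbf{g}}^{t-1}]$ for $t\ge1$. Dual variables $\mathbf{v}^t:=\sum_{s=0}^t\mathbf{U}\mathbf{x}^s$; $\mathbf{v}^*$ is the vector in the column space of $\mathbf{U}$ with $\alpha\nabla f(\mathbf{x}^* )+\mathbf{U}\mathbf{v}^*=\mathbf{0}$. Set $\mathbf{u}^t:=[\mathbf{x}^t;\mathbf{v}^t]$, $\mathbf{u}^*:=[\mathbf{x}^*;\mathbf{v}^*]$, $\mathbf{G}:=\mathrm{diag}(\tilde{\mathbf{Z}},\mathbf{I})\in\mathbb{R}^{2Np\times2Np}$.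 For a symmetric matrix $\mathbf{A}$, $\|\mathbf{z}\|_{\mathbf{A}}^2:=\mathbf{z}^T\mathbf{A}\mathbf{z}$. $\mathcal{F}^t$ is the sigma-algebra of the history up to time $t$. Define $$p^t:=\sum_{n=1}^N\frac1{q_n}\sum_{i=1}^{q_n}\left(f_{n,i}(\mathbf{y}_{n,i}^t)-f_{n,i}(\tilde{\mathbf{x}}^* )-\nabla f_{n,i}(\tilde{\mathbf{x}}^* )^T(\mathbf{y}_{n,i}^t-\tilde{\mathbf{x}}^* )\right).$$ *)

(* Defs.v *)
From mathcomp Require Import all_boot all_algebra.
From mathcomp Require Import all_classical all_reals all_analysis.
From mathcomp.real_closed Require Export mxtens.
Import GRing.Theory Num.Theory numFieldNormedType.Exports.
Set Implicit Arguments. Unset Strict Implicit. Unset Printing Implicit Defensive.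
Local Open Scope ring_scope.

Definition qform (R : pzRingType) (k : nat) (A : 'M[R]_k) (z : 'rV[R]_k) : R :=
  (z *m A *m z^T) 0 0.

Definition dotv (R : pzRingType) (k : nat) (u v : 'rV[R]_k) : R := (u *m v^T) 0 0.
Definition enorm (R : rcfType) (k : nat) (u : 'rV[R]_k) : R := Num.sqrt (dotv u u).

(* R^{Np} is 'rV_(N*p); the block x_n (n-th node's copy) uses the index
   convention of the Kronecker product [tensmx] (mxtens_index (n,k)). *)
Definition blk (R : Type) (N p : nat) (x : 'rV[R]_(N * p)) (n : 'I_N) : 'rV[R]_p :=
  \row_k x 0 (mxtens_index (n, k)).
Definition stack (R : Type) (N p : nat) (b : 'I_N -> 'rV[R]_p) : 'rV[R]_(N * p) :=
  \row_a b (mxtens_unindex a).1 0 (mxtens_unindex a).2.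
Definition nullsp (R : pzRingType) (k : nat) (A : 'M[R]_k) (z : 'cV[R]_k) : Prop :=
  A *m z = 0.
Definition spanOne (R : pzRingType) (k : nat) (z : 'cV[R]_k) : Prop :=
  exists c : R, z = c *: const_mx 1.
Definition psd_le (R : numDomainType) (k : nat) (A B : 'M[R]_k) : Prop :=
  forall z : 'rV[R]_k, qform A z <= qform B z.
Definition pos_def (R : numDomainType) (k : nat) (A : 'M[R]_k) : Prop :=
  forall z : 'rV[R]_k, z != 0 -> 0 < qform A z.

Section Fun.
Variables (R : realType) (p : nat).

Definition is_gradient (f : 'rV[R]_p -> R) (g : 'rV[R]_p -> 'rV[R]_p) : Prop :=
  forall x : 'rV[R]_p, differentiable f x /\ (forall h : 'rV[R]_p, 'd f x h = dotv (g x) h).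

Definition eucl_strongly_convex (mu : R) (f : 'rV[R]_p -> R) : Prop :=
  forall (x y : 'rV[R]_p) (th : R), 0 <= th <= 1 ->
    f (th *: x + (1 - th) *: y)
      <= th * f x + (1 - th) * f y - mu / 2 * th * (1 - th) * (enorm (x - y)) ^+ 2.

Definition eucl_lipschitz (L : R) (g : 'rV[R]_p -> 'rV[R]_p) : Prop :=
  forall x y : 'rV[R]_p, enorm (g x - g y) <= L * enorm (x - y).
End Fun.

Section DSA.
Variables (R : realType) (N p : nat) (q : 'I_N -> nat).
Variable gf : forall n : 'I_N, 'I_(q n) -> 'rV[R]_p -> 'rV[R]_p.
Variables (W Wt : 'M[R]_N) (alpha : R) (x0 : 'rV[R]_(N * p)).

(* one draw (i_1^t, ..., i_N^t) *)
Definition choice_t := {dffun forall n : 'I_N, 'I_(q n)}.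

Definition Zmat : 'M[R]_(N * p) := W *t (1%:M : 'M[R]_p).
Definition Ztmat : 'M[R]_(N * p) := Wt *t (1%:M : 'M[R]_p).

Definition table := forall n : 'I_N, 'I_(q n) -> 'rV[R]_p.

Definition ghat (y : table) (x : 'rV[R]_(N * p)) (c : choice_t) : 'rV[R]_(N * p) :=
  stack (fun n => gf (c n) (blk x n) - gf (c n) (y n (c n))
                  + (q n)%:R^-1 *: \sum_(i < q n) gf i (y n i)).

Definition yupdate (y : table) (x : 'rV[R]_(N * p)) (c : choice_t) : table :=
  fun n i => if i == c n then blk x n else y n i.

Record dsa_state := DsaState {
  st_x : 'rV[R]_(N * p);
  st_xprev : 'rV[R]_(N * p);  (* x^{t-1} (junk at t = 0) *)
  st_gprev : 'rV[R]_(N * p);  (* \hat g^{t-1} (junk at t = 0) *)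
  st_y : table
}.

Variable omega : nat -> choice_t.

Fixpoint dsa (t : nat) : dsa_state :=
  match t with
  | 0 => DsaState x0 x0 0 (fun n _ => blk x0 n)
  | s.+1 =>
      let st := dsa s in
      let g := ghat (st_y st) (st_x st) (omega s) in
      let xn := if s is 0 then st_x st *m Zmat - alpha *: g
                else st_x st *m (1%:M + Zmat) - st_xprev st *m Ztmat
                     - alpha *: (g - st_gprev st) in
      DsaState xn (st_x st) g (yupdate (st_y st) (st_x st) (omega s))
  end.

Definition dsa_x (t : nat) := st_x (dsa t).
Definition dsa_y (t : nat) := st_y (dsa t).
End DSA.

Definition dsa_v (R : realType) N p q gf W Wt alpha x0 (U : 'M[R]_(N * p))
  (omega : nat -> @choice_t N q) (t : nat) : 'rV[R]_(N * p) :=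
  \sum_(s < t.+1) @dsa_x R N p q gf W Wt alpha x0 omega s *m U.

(* Conditional expectation given F^t = sigma(omega 0, ..., omega (t-1)) of a
   random quantity X depending on the sample path: since the draws
   omega t are independent and uniform on choice_t, it is the average over
   the draw at time t (with the past fixed), for X depending only on
   omega 0 .. omega t. *)
Definition condE (R : realType) N (q : 'I_N -> nat) (t : nat)
  (X : (nat -> @choice_t N q) -> R) (omega : nat -> @choice_t N q) : R :=
  (#|{: @choice_t N q}|%:R)^-1 *
    \sum_(c : @choice_t N q) X (fun s => if s == t then c else omega s).

Definition uvec (R : Type) k (x v : 'rV[R]_k) : 'rV[R]_(k + k) := row_mx x v.
Definition Gmat (R : pzRingType) k (Zt : 'M[R]_k) : 'M[R]_(k + k) :=
  block_mx Zt 0 0 1%:M.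

Definition f_loc (R : realType) N p (q : 'I_N -> nat)
  (f : forall n : 'I_N, 'I_(q n) -> 'rV[R]_p -> R) (n : 'I_N) (z : 'rV[R]_p) : R :=
  (q n)%:R^-1 * \sum_(i < q n) f n i z.
Definition F_glob (R : realType) N p (q : 'I_N -> nat)
  (f : forall n : 'I_N, 'I_(q n) -> 'rV[R]_p -> R) (x : 'rV[R]_(N * p)) : R :=
  \sum_(n < N) f_loc f n (blk x n).
Definition gradF_glob (R : realType) N p (q : 'I_N -> nat)
  (gf : forall n : 'I_N, 'I_(q n) -> 'rV[R]_p -> 'rV[R]_p) (x : 'rV[R]_(N * p)) :
  'rV[R]_(N * p) :=
  stack (fun n => (q n)%:R^-1 *: \sum_(i < q n) gf n i (blk x n)).

Definition pterm (R : realType) N p (q : 'I_N -> nat)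
  (f : forall n : 'I_N, 'I_(q n) -> 'rV[R]_p -> R)
  (gf : forall n : 'I_N, 'I_(q n) -> 'rV[R]_p -> 'rV[R]_p)
  (y : forall n : 'I_N, 'I_(q n) -> 'rV[R]_p) (xs : 'rV[R]_p) : R :=
  \sum_(n < N) (q n)%:R^-1 *
    \sum_(i < q n) (f n i (y n i) - f n i xs - dotv (gf n i xs) (y n i - xs)).

(* Main.v *)
Require Import Defs.
From mathcomp Require Import all_boot all_algebra.
From mathcomp Require Import all_classical all_reals all_analysis.
From mathcomp.real_closed Require Import mxtens.
From mathcomp Require Import ring lra.
Import GRing.Theory Num.Theory numFieldNormedType.Exports.
Local Open Scope ring_scope.

Module DSAHelpers.
Import order.Order.TTheory.
Local Open Scope classical_set_scope.
Local Open Scope ring_scope.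
Set Implicit Arguments. Unset Strict Implicit.
Section Dot.
Variables (R : realType) (k : nat).
Implicit Types u v w : 'rV[R]_k.
Definition sq u := dotv u u.

Lemma dotvE u v : dotv u v = \sum_j u 0 j * v 0 j.
Proof. by rewrite /dotv mxE; apply: eq_bigr => j _; rewrite mxE. Qed.
Lemma dotvC u v : dotv u v = dotv v u.
Proof. by rewrite !dotvE; apply: eq_bigr => j _; rewrite mulrC. Qed.
Lemma dotvDl u v w : dotv (u + v) w = dotv u w + dotv v w.
Proof. by rewrite !dotvE -big_split; apply: eq_bigr => j _; rewrite !mxE mulrDl. Qed.
Lemma dotvDr u v w : dotv w (u + v) = dotv w u + dotv w v.
Proof. by rewrite dotvC dotvDl !(dotvC w). Qed.
Lemma dotvZl a u v : dotv (a *: u) v = a * dotv u v.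
Proof. by rewrite !dotvE mulr_sumr; apply: eq_bigr => j _; rewrite !mxE mulrA. Qed.
Lemma dotvZr a u v : dotv v (a *: u) = a * dotv v u.
Proof. by rewrite dotvC dotvZl dotvC. Qed.
Lemma dotvNl u v : dotv (- u) v = - dotv u v.
Proof. by rewrite -scaleN1r dotvZl mulN1r. Qed.
Lemma dotvNr u v : dotv v (- u) = - dotv v u.
Proof. by rewrite dotvC dotvNl dotvC. Qed.
Lemma dotvBl u v w : dotv (u - v) w = dotv u w - dotv v w.
Proof. by rewrite dotvDl dotvNl. Qed.
Lemma dotvBr u v w : dotv w (u - v) = dotv w u - dotv w v.
Proof. by rewrite dotvDr dotvNr. Qed.
Lemma dotv0l v : dotv 0 v = 0.
Proof. by rewrite !dotvE big1 // => j _; rewrite mxE mul0r. Qed.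
Lemma dotv0r v : dotv v 0 = 0.
Proof. by rewrite dotvC dotv0l. Qed.
Lemma dotv_suml I (r : seq I) (P : pred I) (F : I -> 'rV[R]_k) v :
  dotv (\sum_(i <- r | P i) F i) v = \sum_(i <- r | P i) dotv (F i) v.
Proof.
by apply: (big_morph (fun u => dotv u v)) => [x y|]; rewrite ?dotvDl ?dotv0l.
Qed.
Lemma dotv_sumr I (r : seq I) (P : pred I) (F : I -> 'rV[R]_k) v :
  dotv v (\sum_(i <- r | P i) F i) = \sum_(i <- r | P i) dotv v (F i).
Proof. by rewrite dotvC dotv_suml; apply: eq_bigr => i _; rewrite dotvC. Qed.
Lemma sq_ge0 u : 0 <= sq u.
Proof. by rewrite /sq dotvE sumr_ge0 // => j _; rewrite -expr2 sqr_ge0. Qed.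
Lemma sq_eq0 u : sq u = 0 -> u = 0.
Proof.
rewrite /sq dotvE => /eqP; rewrite psumr_eq0 => [/allP H|j _]; last by rewrite -expr2 sqr_ge0.
apply/rowP => j; rewrite mxE; have := H j (mem_index_enum j).
by rewrite -expr2 sqrf_eq0 => /eqP.
Qed.
Lemma sqD u v : sq (u + v) = sq u + 2 * dotv u v + sq v.
Proof. rewrite /sq dotvDl !dotvDr (dotvC v u); ring. Qed.
Lemma sqB u v : sq (u - v) = sq u - 2 * dotv u v + sq v.
Proof. rewrite /sq dotvDl !dotvDr !dotvNl !dotvNr opprK (dotvC v u); ring. Qed.
Lemma sqZ a u : sq (a *: u) = a ^+ 2 * sq u.
Proof. by rewrite /sq dotvZl dotvZr mulrA expr2. Qed.
Lemma sqN u : sq (- u) = sq u.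
Proof. by rewrite /sq dotvNl dotvNr opprK. Qed.
Lemma enorm_sq u : enorm u ^+ 2 = sq u.
Proof. by rewrite /enorm sqr_sqrtr // sq_ge0. Qed.
Lemma enorm_ge0 u : 0 <= enorm u.
Proof. exact: sqrtr_ge0. Qed.
Lemma amgm u v s : 2 * s * dotv u v <= sq u + s ^+ 2 * sq v.
Proof. have := sq_ge0 (u - s *: v); rewrite sqB dotvZr sqZ; lra. Qed.
Lemma qform1 u : qform 1%:M u = sq u.
Proof. by rewrite /qform mulmx1. Qed.
End Dot.

Set Implicit Arguments. Unset Strict Implicit.
Section FO.
Variables (R : realType) (p : nat).
Lemma dnbhs_right (T : Type) (q : R -> T) (F : set_system T) :
  q @ (0:R)^' --> F -> q @ (0:R)^'+ --> F.
Proof.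
move=> H; apply: cvg_trans H => P /=.
rewrite !nbhs_simpl /=; rewrite /prop_near1 /= /dnbhs /within /= => HP.
apply: filterS HP => x Hx x0; apply: Hx; exact: lt0r_neq0.
Qed.

Lemma first_order (h : 'rV[R]_p -> R) g mu : is_gradient h g -> eucl_strongly_convex mu h ->
  forall x y, h y + dotv (g y) (x - y) + mu / 2 * sq (x - y) <= h x.
Proof.
move=> Hg Hc x y; set v := x - y.
have [dh Hd] := Hg y.
have Dv : 'D_v h y = dotv (g y) v by rewrite deriveE // Hd.
have dv : derivable h y v by apply: diff_derivable.
set K := mu / 2 * sq v.
set qf := fun th : R => th^-1 *: ((h \o shift y) (th *: v) - h y).
have cq : qf @ 0^' --> 'D_v h y by exact: dv.
have cq' : (fun th => qf th - th * K) @ 0^'+ --> 'D_v h y - 0 * K.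
  apply: cvgB; first exact: dnbhs_right.
  apply: cvgMl; apply: cvg_at_right_filter; exact: cvg_id.
rewrite mul0r subr0 Dv in cq'.
suff : dotv (g y) v <= h x - h y - K by lra.
apply: (cvgr_to_le cq'); near=> th.
have th0 : 0 < th by near: th; exact: nbhs_right_gt.
have th1 : th <= 1 by near: th; exact: nbhs_right_le.
have := Hc x y th; rewrite th1 ltW //= => /(_ isT).
have -> : th *: x + (1 - th) *: y = th *: v + y.
  by apply/rowP => k; rewrite !mxE; ring.
rewrite enorm_sq -/v /qf /= => H.
set D := h (th *: v + y) - h y.
have -> : th^-1 *: D = th^-1 * D by [].
have E : D = th * (th^-1 * D) by rewrite mulrA mulfV ?mul1r // lt0r_neq0.
rewrite /K; move: E; set D' := th^-1 * D => E.
have : th * D' <= th * (h x - h y - mu/2 * sq v + th * (mu/2 * sq v)).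
  rewrite -E /D; nra.
rewrite ler_pM2l //; lra.
Unshelve. all: by end_near.
Qed.

Lemma sum_nat_succ (m : nat) : \sum_(0 <= j < m) (j.+1)%:R = (m%:R * (m%:R + 1)) / 2 :> R.
Proof.
elim: m => [|m IH]; first by rewrite big_nil mul0r mul0r.
rewrite big_nat_recr //= IH -natr1 -[(m.+1)%:R]natr1; by field.
Qed.

Lemma sq_le_lip (a b : 'rV[R]_p) L : 0 <= L -> enorm a <= L * enorm b -> sq a <= L ^+ 2 * sq b.
Proof.
move=> L0 H; rewrite -!enorm_sq; have := enorm_ge0 a; have := enorm_ge0 b; nra.
Qed.

Lemma descent (h : 'rV[R]_p -> R) g L : 0 < L ->
  (forall x y, h y + dotv (g y) (x - y) <= h x) -> eucl_lipschitz L g ->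
  forall y v, h (y + v) - h y - dotv (g y) v <= L / 2 * sq v.
Proof.
move=> L0 Hc Hl y v.
have key : forall k : nat, h (y + v) - h y - dotv (g y) v <= L / 2 * sq v + L * sq v / (2 * (k.+1)%:R).
  move=> k; set m := k.+1.
  have m0 : (m%:R : R) != 0 by rewrite pnatr_eq0.
  have mp : (0 : R) < m%:R by rewrite ltr0n.
  pose xj (j : nat) := y + (j%:R / m%:R) *: v.
  have tel : h (y + v) - h y = \sum_(0 <= j < m) (h (xj j.+1) - h (xj j)).
    rewrite telescope_sumr // /xj mul0r scale0r addr0 divff //.
    by rewrite scale1r.
  have step : forall j, h (xj j.+1) - h (xj j) <=
      m%:R^-1 * (L * ((j.+1)%:R / m%:R) * sq v + dotv (g y) v).
    move=> j; have := Hc (xj j) (xj j.+1).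
    have -> : xj j - xj j.+1 = - (m%:R^-1 *: v).
      by apply/rowP => i; rewrite /xj !mxE -natr1; field.
    rewrite dotvNr dotvZr => H1.
    set s := L * ((j.+1)%:R / m%:R).
    have s0 : 0 < s by rewrite /s mulr_gt0 // divr_gt0 // ltr0n.
    have Hlip := Hl (xj j.+1) y.
    have E2 : xj j.+1 - y = ((j.+1)%:R / m%:R) *: v.
      by apply/rowP => i; rewrite /xj !mxE; ring.
    rewrite E2 in Hlip; have Hsq := sq_le_lip (ltW L0) (Hlip).
    rewrite sqZ in Hsq.
    have Ham := amgm (g (xj j.+1) - g y) v s.
    have E : dotv (g (xj j.+1)) v = dotv (g (xj j.+1) - g y) v + dotv (g y) v.
      by rewrite dotvBl; ring.
    have Hs2 : L ^+ 2 * (((j.+1)%:R / m%:R) ^+ 2 * sq v) = s ^+ 2 * sq v.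
      by rewrite /s; ring.
    have : 2 * s * dotv (g (xj j.+1) - g y) v <= 2 * s * (s * sq v) by nra.
    rewrite ler_pM2l; last by rewrite mulr_gt0.
    move=> Hd.
    have mi : 0 < (m%:R : R)^-1 by rewrite invr_gt0 ltr0n.
    rewrite -/s; nra.
  have sumb : h (y + v) - h y <= \sum_(0 <= j < m)
      m%:R^-1 * (L * ((j.+1)%:R / m%:R) * sq v + dotv (g y) v).
    by rewrite tel; apply: ler_sum => j _; apply: step.
  move: sumb; have -> : \sum_(0 <= j < m) m%:R^-1 * (L * ((j.+1)%:R / m%:R) * sq v + dotv (g y) v)
      = (m%:R^-1 * (L / m%:R * sq v)) * \sum_(0 <= j < m) (j.+1)%:R + dotv (g y) v.
    transitivity (\sum_(0 <= j < m) ((m%:R^-1 * (L / m%:R * sq v)) * (j.+1)%:R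
        + m%:R^-1 * dotv (g y) v)).
      by apply: eq_bigr => j _; field.
    rewrite big_split /= -mulr_sumr sumr_const_nat subn0.
    by rewrite -[X in _ + X]mulr_natr; field.
  rewrite sum_nat_succ => H.
  have -> : L / 2 * sq v + L * sq v / (2 * m%:R) =
     m%:R^-1 * (L / m%:R * sq v) * (m%:R * (m%:R + 1) / 2) by field.
  lra.
apply/ler_addgt0Pr => e e0.
set B := L * sq v / (2 * e).
have B0 : 0 <= B.
  rewrite /B; apply: divr_ge0; first by apply: mulr_ge0; [apply: ltW | apply: sq_ge0].
  by apply: mulr_ge0; [rewrite ler0n | apply: ltW].
have HB := archi_boundP B0.
set k := Num.bound B in HB.
apply: (le_trans (key k)); rewrite lerD2l.
have kp : (0 : R) < (k.+1)%:R by rewrite ltr0n.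
rewrite ler_pdivrMr ?mulr_gt0 //.
have : B <= (k.+1)%:R by rewrite -natr1; lra.
rewrite /B ler_pdivrMr ?mulr_gt0 //; nra.
Qed.
End FO.

Set Implicit Arguments. Unset Strict Implicit.
Section PerFun.
Variables (R : realType) (p : nat).
Definition Dh (h : 'rV[R]_p -> R) g x y := h x - h y - dotv (g y) (x - y).

Variables (h : 'rV[R]_p -> R) (g : 'rV[R]_p -> 'rV[R]_p) (mu L : R).
Hypotheses (mu0 : 0 < mu) (L0 : 0 < L) (Hg : is_gradient h g)
  (Hc : eucl_strongly_convex mu h) (Hl : eucl_lipschitz L g).

Lemma convex1 x y : h y + dotv (g y) (x - y) <= h x.
Proof.
have := first_order Hg Hc x y; have := sq_ge0 (x - y).
have : 0 <= mu / 2 by rewrite divr_ge0 // ltW.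
nra.
Qed.

Lemma F1 x y : mu / 2 * sq (x - y) <= Dh h g x y.
Proof. have := first_order Hg Hc x y; rewrite /Dh; lra. Qed.

Lemma F2 x y : Dh h g x y <= L / 2 * sq (x - y).
Proof.
have := descent L0 convex1 Hl y (x - y).
by rewrite [y + _]addrC subrK /Dh.
Qed.

Lemma Dsym x y : dotv (x - y) (g x - g y) = Dh h g x y + Dh h g y x.
Proof.
rewrite /Dh dotvBr (dotvC (x - y) (g x)) (dotvC (x - y) (g y)).
have -> : y - x = - (x - y) by rewrite opprB.
rewrite dotvNr; ring.
Qed.

Lemma F3 x y : sq (g x - g y) <= 2 * L * Dh h g x y.
Proof.
set r := g x - g y; set il := L^-1.
have Lil : L * il = 1 by rewrite /il mulfV // lt0r_neq0.
set z := x - il *: r.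
have H1 := convex1 z y.
have H2 := descent L0 convex1 Hl x (z - x).
rewrite [x + _]addrC subrK in H2.
have E1 : z - x = - (il *: r) by rewrite /z addrC addKr.
rewrite E1 in H2.
rewrite dotvNr dotvZr sqN sqZ in H2.
have E2 : z - y = (x - y) - il *: r by rewrite /z addrAC.
rewrite E2 in H1.
rewrite dotvBr dotvZr in H1.
have E : dotv (g x) r - dotv (g y) r = sq r by rewrite /sq -dotvBl.
have Hd : il * sq r / 2 <= Dh h g x y.
  rewrite /Dh.
  have : L / 2 * (il ^+ 2 * sq r) = il * sq r / 2.
    rewrite /il; field; exact: lt0r_neq0.
  nra.
have -> : sq r = 2 * L * (il * sq r / 2).
  rewrite /il; field; exact: lt0r_neq0.
by rewrite ler_pM2l // mulr_gt0.
Qed.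
End PerFun.

Set Implicit Arguments. Unset Strict Implicit.
Section Node.
Variables (R : realType) (p q : nat).
Hypothesis hq : (0 < q)%N.
Let qi := (q%:R : R)^-1.
Lemma qn0 : (q%:R : R) != 0. Proof. by rewrite pnatr_eq0 -lt0n. Qed.
Lemma qi_ge0 : 0 <= qi. Proof. by rewrite /qi invr_ge0 ler0n. Qed.

Lemma mean_le (F G : 'I_q -> R) : (forall i, F i <= G i) -> qi * \sum_i F i <= qi * \sum_i G i.
Proof. by move=> H; apply: ler_wpM2l; [exact: qi_ge0 | apply: ler_sum => i _]. Qed.

Lemma mean_const (c : R) : qi * \sum_(i < q) c = c.
Proof. by rewrite sumr_const card_ord -mulr_natr /qi mulrC (mulfK qn0). Qed.

Lemma mean_add (F G : 'I_q -> R) : qi * \sum_i (F i + G i) = qi * \sum_i F i + qi * \sum_i G i.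
Proof. by rewrite big_split mulrDr. Qed.
Lemma mean_sub (F G : 'I_q -> R) : qi * \sum_i (F i - G i) = qi * \sum_i F i - qi * \sum_i G i.
Proof. by rewrite sumrB mulrBr. Qed.
Lemma mean_scale (a : R) (F : 'I_q -> R) : qi * \sum_i (a * F i) = a * (qi * \sum_i F i).
Proof. by rewrite -mulr_sumr mulrCA. Qed.

Lemma mean_dotl (z : 'I_q -> 'rV[R]_p) c : qi * \sum_i dotv (z i) c = dotv (qi *: \sum_i z i) c.
Proof. by rewrite dotvZl dotv_suml. Qed.

Lemma VarL (z : 'I_q -> 'rV[R]_p) c :
  qi * \sum_i sq (z i + c) = qi * \sum_i sq (z i) + 2 * dotv (qi *: \sum_i z i) c + sq c.
Proof.
under eq_bigr do rewrite sqD.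
rewrite mean_add mean_add mean_const mean_scale mean_dotl; done.
Qed.

Lemma center0 (z : 'I_q -> 'rV[R]_p) : qi *: \sum_i (z i - qi *: \sum_j z j) = 0.
Proof.
rewrite sumrB sumr_const card_ord -scaler_nat scalerA /qi mulfV ?qn0 //.
by rewrite scale1r subrr scaler0.
Qed.

Lemma mean_dotr_center (z : 'I_q -> 'rV[R]_p) e : \sum_i dotv e (qi *: \sum_j z j - z i) = 0.
Proof.
rewrite -dotv_sumr sumrB sumr_const card_ord -scaler_nat scalerA /qi mulfV ?qn0 //.
by rewrite scale1r subrr dotv0r.
Qed.

Lemma sq_sub_le (a b : 'rV[R]_p) : sq (a - b) <= 2 * sq a + 2 * sq b.
Proof. have := sq_ge0 (a + b); rewrite sqB sqD; lra. Qed.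

Variables (hs : 'I_q -> 'rV[R]_p -> R) (gs : 'I_q -> 'rV[R]_p -> 'rV[R]_p) (mu L : R).
Hypotheses (mu0 : 0 < mu) (L0 : 0 < L) (Hg : forall i, is_gradient (hs i) (gs i))
  (Hc : forall i, eucl_strongly_convex mu (hs i)) (Hl : forall i, eucl_lipschitz L (gs i)).

Variables (x xs : 'rV[R]_p) (yy : 'I_q -> 'rV[R]_p).
Let gn i : 'rV[R]_p := gs i x - gs i (yy i) + qi *: \sum_j gs j (yy j) - qi *: \sum_j gs j xs.

Lemma NodeM : (2 * mu / L) * (qi * \sum_i Dh (hs i) (gs i) x xs)
   <= qi * \sum_i dotv (x - xs) (gn i).
Proof.
have E : forall i, dotv (x - xs) (gn i) = dotv (x - xs) (gs i x - gs i xs)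
   + dotv (x - xs) (qi *: \sum_j gs j (yy j) - gs i (yy i))
   - dotv (x - xs) (qi *: \sum_j gs j xs - gs i xs).
  by move=> i; rewrite /gn !dotvBr !dotvDr ?dotvBr dotvNr; lra.
rewrite (eq_bigr _ (fun i _ => E i)).
rewrite [in X in _ <= X]sumrB [in X in _ <= X]big_split /= !mean_dotr_center addr0 subr0 -mean_scale.
apply: mean_le => i.
rewrite (Dsym (hs i)).
have h1 := F1 (Hg i) (Hc i) x xs.
have h2 := F1 (Hg i) (Hc i) xs x.
have h3 := F2 mu0 L0 (Hg i) (Hc i) (Hl i) x xs.
have E3 : xs - x = - (x - xs) by rewrite opprB.
rewrite E3 sqN in h2.
set D := Dh (hs i) (gs i) x xs in h1 h3 *.
have : 2 * mu / L * D <= 2 * mu / L * (L / 2 * sq (x - xs)).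
  by apply: ler_wpM2l => //; rewrite divr_ge0 ?mulr_ge0 // ltW.
have -> : 2 * mu / L * (L / 2 * sq (x - xs)) = mu * sq (x - xs).
  by field; rewrite lt0r_neq0.
lra.
Qed.

Lemma NodeV : qi * \sum_i sq (gn i) <=
   4 * L * (qi * \sum_i Dh (hs i) (gs i) (yy i) xs) + 2 * (2 * L - mu) * (qi * \sum_i Dh (hs i) (gs i) x xs).
Proof.
pose A i := gs i x - gs i xs. pose B i := gs i (yy i) - gs i xs.
set Ab := qi *: \sum_i A i. set Bb := qi *: \sum_i B i.
have EB : Bb = qi *: \sum_j gs j (yy j) - qi *: \sum_j gs j xs by rewrite /Bb sumrB scalerBr.
have E1 : forall i, gn i = ((A i - Ab) - (B i - Bb)) + Ab.
  move=> i; rewrite /gn EB /A /B.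
  move: (qi *: _) (qi *: _) Ab => Y X Z.
  by apply/rowP => k; rewrite !mxE; ring.
rewrite (eq_bigr (fun i => sq (A i - Ab - (B i - Bb) + Ab))); last by move=> i _; rewrite E1.
rewrite VarL.
have -> : qi *: \sum_i (A i - Ab - (B i - Bb)) = 0.
  by rewrite sumrB scalerBr /Ab /Bb !center0 subr0.
rewrite dotv0l mulr0 addr0.
have HA : qi * \sum_i sq (A i - Ab) = qi * \sum_i sq (A i) - sq Ab.
  rewrite VarL -/Ab dotvNr sqN /sq; ring.
have HB : qi * \sum_i sq (B i - Bb) = qi * \sum_i sq (B i) - sq Bb.
  rewrite VarL -/Bb dotvNr sqN /sq; ring.
have Hz : qi * \sum_i sq (A i - Ab - (B i - Bb)) <=
   2 * (qi * \sum_i sq (A i - Ab)) + 2 * (qi * \sum_i sq (B i - Bb)).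
  rewrite -!mean_scale -mean_add; apply: mean_le => i; exact: sq_sub_le.
have HsA : qi * \sum_i sq (A i) <= 2 * L * (qi * \sum_i Dh (hs i) (gs i) x xs).
  rewrite -mean_scale; apply: mean_le => i; exact: (F3 mu0 L0 (Hg i) (Hc i) (Hl i)).
have HsB : qi * \sum_i sq (B i) <= 2 * L * (qi * \sum_i Dh (hs i) (gs i) (yy i) xs).
  rewrite -mean_scale; apply: mean_le => i; exact: (F3 mu0 L0 (Hg i) (Hc i) (Hl i)).
have HBb := sq_ge0 Bb.
set Dn := qi * \sum_i Dh (hs i) (gs i) x xs in HsA *.
have HD : Dn <= dotv (x - xs) Ab - mu / 2 * sq (x - xs).
  rewrite /Ab dotvC -mean_dotl -[mu / 2 * sq (x - xs)]mean_const -mean_sub /Dn.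
  apply: mean_le => i; rewrite dotvC /A (Dsym (hs i)).
  have h2 := F1 (Hg i) (Hc i) xs x.
  have E3 : xs - x = - (x - xs) by rewrite opprB.
  rewrite E3 sqN in h2; lra.
have Ham := amgm Ab (x - xs) mu.
have HD2 : 2 * mu * Dn <= sq Ab.
  rewrite dotvC in HD.
  have := ler_wpM2l (ltW mu0) HD; lra.
nra.
Qed.
End Node.

Set Implicit Arguments. Unset Strict Implicit.

Section Kron.
Variables (R : realType) (N p : nat).
Lemma blk_stack (b : 'I_N -> 'rV[R]_p) n : blk (stack b) n = b n.
Proof. by apply/rowP => k; rewrite !mxE mxtens_indexK. Qed.
Lemma stack_blk (x : 'rV[R]_(N * p)) : stack (blk x) = x.
Proof.
apply/rowP => a; rewrite !mxE; congr (x 0 _).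
by rewrite -[RHS]mxtens_unindexK; case: (mxtens_unindex a).
Qed.
Lemma blkD (x y : 'rV[R]_(N * p)) n : blk (x + y) n = blk x n + blk y n.
Proof. by apply/rowP => k; rewrite !mxE. Qed.
Lemma blkN (x : 'rV[R]_(N * p)) n : blk (- x) n = - blk x n.
Proof. by apply/rowP => k; rewrite !mxE. Qed.
Lemma blkB (x y : 'rV[R]_(N * p)) n : blk (x - y) n = blk x n - blk y n.
Proof. by rewrite blkD blkN. Qed.
Lemma blkZ a (x : 'rV[R]_(N * p)) n : blk (a *: x) n = a *: blk x n.
Proof. by apply/rowP => k; rewrite !mxE. Qed.
Lemma dotv_blk (x y : 'rV[R]_(N * p)) :
  dotv x y = \sum_n dotv (blk x n) (blk y n).
Proof.
rewrite dotvE (reindex (@mxtens_index N p)) /=; last first.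
  by exists (@mxtens_unindex N p) => a _; rewrite (mxtens_indexK, mxtens_unindexK).
symmetry.
rewrite (eq_bigr (fun n => \sum_k x 0 (mxtens_index (n, k)) * y 0 (mxtens_index (n, k)))); last first.
  by move=> n _; rewrite dotvE; apply: eq_bigr => k _; rewrite !mxE.
rewrite pair_big /=; by apply: eq_bigr => [[n k]] _.
Qed.

Lemma stackE (b : 'I_N -> 'rV[R]_p) n k : stack b 0 (mxtens_index (n, k)) = b n 0 k.
Proof. by rewrite mxE mxtens_indexK. Qed.

Lemma stack_const_mul (Wm : 'M[R]_N) (xs : 'rV[R]_p) : (forall n, \sum_m Wm m n = 1) ->
  stack (fun _ => xs) *m (Wm *t 1%:M) = stack (fun _ => xs).
Proof.
move=> Hs; apply/rowP => a; case: (mxtens_indexP a) => n k.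
rewrite stackE [LHS]mxE (reindex (@mxtens_index N p)) /=; last first.
  by exists (@mxtens_unindex N p) => b _; rewrite (mxtens_indexK, mxtens_unindexK).
transitivity (\sum_m \sum_l xs 0 l * (Wm m n * (1%:M : 'M[R]_p) l k)).
  by rewrite pair_big /=; apply: eq_bigr => [[m l]] _; rewrite stackE tensmxE.
rewrite -[RHS]mulr1 -[in RHS](Hs n) mulr_sumr; apply: eq_bigr => m _.
rewrite (bigD1 k) //= big1 ?addr0; first by rewrite !mxE eqxx /= mulr1 mulrC.
by move=> l /= lk; rewrite !mxE (negbTE lk) !mulr0.
Qed.

Lemma colsum1 (Wm : 'M[R]_N) : Wm^T = Wm ->
  (forall z, spanOne z -> nullsp (1%:M - Wm) z) -> forall n, \sum_m Wm m n = 1.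
Proof.
move=> Ws H n.
have : (1%:M - Wm) *m (const_mx 1 : 'cV[R]_N) = 0 by apply: H; exists 1; rewrite scale1r.
rewrite mulmxBl mul1mx => /matrixP /(_ n 0); rewrite !mxE => /eqP; rewrite subr_eq0 => /eqP E.
rewrite {1}E; apply: eq_bigr => m _; rewrite !mxE mulr1.
by rewrite -[in LHS]Ws mxE.
Qed.

Lemma tens_sym (Wm : 'M[R]_N) : Wm^T = Wm -> (Wm *t (1%:M : 'M[R]_p))^T = Wm *t 1%:M.
Proof. by move=> Ws; rewrite trmx_tens Ws trmx1. Qed.

Lemma U_kills (U Zt Z : 'M[R]_(N * p)) (xst : 'rV[R]_(N * p)) : U^T = U -> U *m U = Zt - Z ->
  xst *m Zt = xst -> xst *m Z = xst -> xst *m U = 0.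
Proof.
move=> Us UU H1 H2; apply: sq_eq0.
rewrite /sq /dotv trmx_mul Us mulmxA -(mulmxA xst) UU mulmxBr H1 H2 subrr.
by rewrite mul0mx mxE.
Qed.
End Kron.

Section DSAF.
Variables (R : realType) (N p : nat) (q : 'I_N -> nat).
Variable gf : forall n : 'I_N, 'I_(q n) -> 'rV[R]_p -> 'rV[R]_p.
Variables (W Wt : 'M[R]_N) (alpha : R) (x0 : 'rV[R]_(N * p)).

Lemma dsa_dep (w w' : nat -> choice_t q) t : (forall s, (s < t)%N -> w s = w' s) ->
  dsa gf W Wt alpha x0 w t = dsa gf W Wt alpha x0 w' t.
Proof.
elim: t => [//|t IH] H /=.
by rewrite IH ?H // => s st; apply: H; apply: ltnW.
Qed.

Definition Gt (w : nat -> choice_t q) t :=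
  ghat gf (dsa_y gf W Wt alpha x0 w t) (dsa_x gf W Wt alpha x0 w t) (w t).

Lemma dsa_rec w t : dsa_x gf W Wt alpha x0 w t.+1 =
  dsa_x gf W Wt alpha x0 w t *m Ztmat p Wt
  - (\sum_(s < t.+1) dsa_x gf W Wt alpha x0 w s) *m (Ztmat p Wt - Zmat p W)
  - alpha *: Gt w t.
Proof.
set x := dsa_x gf W Wt alpha x0 w.
elim: t => [|t IH].
  rewrite big_ord1 mulmxBr /x /dsa_x /Gt /=.
  by rewrite opprB addrA addrAC subrr add0r.
have E : x t.+2 = x t.+1 *m (1%:M + Zmat p W) - x t *m Ztmat p Wt - alpha *: (Gt w t.+1 - Gt w t).
  by [].
rewrite E big_ord_recr /= mulmxDl !mulmxBr mulmxDr mulmx1 scalerBr.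
move: IH; rewrite mulmxBr.
move: (x t.+1 *m _) (x t.+1 *m _) (x t *m _) ((\sum_(i < t.+1) x i) *m _) ((\sum_(i < t.+1) x i) *m _).
move: (x t.+1) (alpha *: Gt w t) (alpha *: Gt w t.+1) => X1 G0 G1 a b c d e IH.
apply/rowP => j; have := congr1 (fun M : 'rV_(N * p) => M 0 j) IH; rewrite !mxE => ->.
by ring.
Qed.
End DSAF.

Set Implicit Arguments. Unset Strict Implicit.
Section Exp.
Variables (R : realType) (N : nat) (q : 'I_N -> nat).
Hypothesis hq : forall n, (0 < q n)%N.
Definition shf (m : 'I_N) (k : nat) (j : 'I_(q m)) : 'I_(q m) := Ordinal (ltn_pmod (j + k) (hq m)).
Definition tau (n0 : 'I_N) (k : nat) (c : choice_t q) : choice_t q :=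
  finfun (fun m => if m == n0 then shf k (c m) else c m).

Lemma shf_inj m k : injective (@shf m k).
Proof.
move=> j j' /(congr1 val) /= /eqP; rewrite eqn_modDr => /eqP.
by rewrite !modn_small // => /val_inj.
Qed.
Lemma shf_inj2 m (j : 'I_(q m)) : injective (fun k : 'I_(q m) => shf k j).
Proof.
move=> k k' /(congr1 val) /= /eqP; rewrite !(addnC j) eqn_modDr => /eqP.
by rewrite !modn_small // => /val_inj.
Qed.
Lemma tau_inj n0 k : injective (tau n0 k).
Proof.
move=> c c' E; apply/ffunP => m; have := congr1 (fun f : choice_t q => f m) E.
rewrite /tau !ffunE; case: (m == n0) => //; exact: shf_inj.
Qed.

Lemma sum_coord n0 (F : 'I_(q n0) -> R) :
  (q n0)%:R * \sum_(c : choice_t q) F (c n0) = #|{: choice_t q}|%:R * \sum_i F i.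
Proof.
have H : forall k : 'I_(q n0), \sum_(c : choice_t q) F (c n0) = \sum_(c : choice_t q) F (shf k (c n0)).
  move=> k; rewrite (reindex_inj (@tau_inj n0 k)) /=; apply: eq_bigr => c _.
  by rewrite /tau ffunE eqxx.
rewrite -[in LHS](card_ord (q n0)) mulr_natl -sumr_const.
rewrite (eq_bigr _ (fun k _ => H k)) exchange_big /=.
rewrite (eq_bigr (fun _ => \sum_i F i)); last first.
  by move=> c _; rewrite [RHS](reindex_inj (@shf_inj2 n0 (c n0))).
by rewrite sumr_const mulr_natl.
Qed.

Lemma card_ct_gt0 : (0 < #|{: choice_t q}|)%N.
Proof.
apply/card_gt0P; exists (finfun (fun m => Ordinal (hq m)) : choice_t q); by [].
Qed.

Lemma expect_sum (h : forall n : 'I_N, 'I_(q n) -> R) :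
  (#|{: choice_t q}|%:R)^-1 * \sum_(c : choice_t q) \sum_n h n (c n)
  = \sum_n (q n)%:R^-1 * \sum_i h n i.
Proof.
have c0 : (#|{: choice_t q}|%:R : R) != 0 by rewrite pnatr_eq0 -lt0n card_ct_gt0.
rewrite exchange_big mulr_sumr; apply: eq_bigr => n _.
have qn0 : ((q n)%:R : R) != 0 by rewrite pnatr_eq0 -lt0n.
apply: (mulfI qn0); rewrite mulrCA sum_coord mulKf // mulVKf //.
Qed.

Lemma expect_const (k : R) : (#|{: choice_t q}|%:R)^-1 * \sum_(c : choice_t q) k = k.
Proof.
have c0 : (#|{: choice_t q}|%:R : R) != 0 by rewrite pnatr_eq0 -lt0n card_ct_gt0.
by rewrite sumr_const -[k *+ _]mulr_natl mulKf.
Qed.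
End Exp.

Set Implicit Arguments. Unset Strict Implicit.
Section QF.
Variables (R : realType) (k : nat).
Implicit Types (u v w : 'rV[R]_k) (A B : 'M[R]_k).
Lemma qformE A u : qform A u = dotv (u *m A) u. Proof. by []. Qed.
Lemma qformD A B u : qform (A + B) u = qform A u + qform B u.
Proof. by rewrite !qformE mulmxDr dotvDl. Qed.
Lemma qformN A u : qform (- A) u = - qform A u.
Proof. by rewrite !qformE mulmxN dotvNl. Qed.
Lemma qformB A B u : qform (A - B) u = qform A u - qform B u.
Proof. by rewrite qformD qformN. Qed.
Lemma qformZ a A u : qform (a *: A) u = a * qform A u.
Proof. by rewrite !qformE -scalemxAr dotvZl. Qed.
Lemma dotv_sym A u v : A^T = A -> dotv (u *m A) v = dotv (v *m A) u.
Proof.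
move=> AT; rewrite /dotv; transitivity (((u *m A) *m v^T)^T 0 0); first by rewrite [RHS]mxE.
by rewrite !trmx_mul trmxK AT mulmxA.
Qed.
Lemma dotv_mulr A u v : dotv u (v *m A) = dotv (u *m A^T) v.
Proof. by rewrite /dotv trmx_mul mulmxA. Qed.
Lemma bilDl A u v w : dotv ((u + v) *m A) w = dotv (u *m A) w + dotv (v *m A) w.
Proof. by rewrite mulmxDl dotvDl. Qed.
Lemma bilBl A u v w : dotv ((u - v) *m A) w = dotv (u *m A) w - dotv (v *m A) w.
Proof. by rewrite mulmxBl dotvBl. Qed.
Lemma qform_sub A u v : A^T = A -> qform A (u - v) = qform A u - 2 * dotv (u *m A) v + qform A v.
Proof.
move=> AT; rewrite !qformE !bilBl !dotvBr (dotv_sym v u AT); ring.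
Qed.
End QF.

Lemma qformG (R : realType) k (Zt : 'M[R]_k) (X V Y W : 'rV[R]_k) :
  qform (Gmat Zt) (uvec X V - uvec Y W) = qform Zt (X - Y) + sq (V - W).
Proof.
rewrite /uvec opp_row_mx add_row_mx /qform /Gmat mul_row_block !mulmx0 addr0 add0r mulmx1.
by rewrite tr_row_mx mul_row_col mxE.
Qed.

Lemma PC (R : realType) k (Zt Z U : 'M[R]_k) (xst vst xt vt X1 gh gs : 'rV[R]_k) (alpha eta : R) :
  Zt^T = Zt -> U^T = U -> U *m U = Zt - Z -> xst *m Zt = xst -> xst *m U = 0 ->
  0 < alpha -> 0 < eta ->
  alpha *: gs = - (vst *m U) ->
  X1 = xt *m Zt - vt *m U - alpha *: gh ->
  qform (Gmat Zt) (uvec X1 (vt + X1 *m U) - uvec xst vst)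
  <= qform (Gmat Zt) (uvec xt vt - uvec xst vst)
     - 2 * qform (1%:M + Z - 2%:R *: Zt) (X1 - xst)
     - qform (Zt - (2%:R * alpha * eta) *: 1%:M) (X1 - xt)
     - qform 1%:M (X1 *m U)
     + alpha / eta * sq (gh - gs) - 2 * alpha * dotv (xt - xst) (gh - gs).
Proof.
move=> ZtT UT UU xZt xU al0 et0 Hgs HX1.
rewrite !qformG.
set a := X1 - xst; set e := xt - xst; set d := X1 - xt; set w := vt - vst; set g := gh - gs.
have hd : d = a - e by rewrite /d /a /e opprB addrA subrK.
have haU : X1 *m U = a *m U by rewrite /a mulmxBl xU subr0.
have hw : vt + X1 *m U - vst = w + a *m U by rewrite haU /w addrAC.
have hag : alpha *: g = e *m Zt - a - w *m U.
  rewrite /g scalerBr Hgs /e /a /w mulmxBl xZt mulmxBl.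
  move: HX1; move: (xt *m Zt) (vt *m U) (vst *m U) (alpha *: gh) => P Q S T ->.
  by apply/rowP => j; rewrite !mxE; ring.
rewrite hw haU.
clearbody a e d w g.
set A1 := dotv (a *m Zt) a; set A2 := dotv (e *m Zt) e; set A3 := dotv (a *m Zt) e.
set A4 := dotv (a *m Z) a.
have r1 : qform Zt d = A1 - 2 * A3 + A2.
  by rewrite hd qform_sub.
have r2 : sq (a *m U) = A1 - A4.
  by rewrite /sq dotv_mulr UT -mulmxA UU mulmxBr dotvBl.
have r3 : sq (w + a *m U) = sq w + 2 * dotv w (a *m U) + sq (a *m U) by rewrite sqD.
have r4 : qform (1%:M + Z - 2%:R *: Zt) a = sq a + A4 - 2 * A1.
  by rewrite qformB qformD qformZ qform1.
have r5 : qform (Zt - (2%:R * alpha * eta) *: 1%:M) d = qform Zt d - 2 * alpha * eta * sq d.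
  by rewrite qformB qformZ qform1.
have r6 : alpha * dotv a g = A3 - sq a - dotv w (a *m U).
  rewrite -dotvZr hag !dotvBr dotvC /A3.
  rewrite (dotvC a (w *m U)) dotv_mulr UT (dotv_sym e a ZtT) //.
have r7 : dotv a g = dotv d g + dotv e g by rewrite hd dotvBl; ring.
have r8 := sq_ge0 (g + eta *: d).
rewrite sqD sqZ dotvZr in r8.
have r9 := sq_ge0 d.
have r10 : 0 <= alpha / eta by rewrite divr_ge0 // ltW.
have r11 : 0 <= alpha / eta * (sq g + 2 * (eta * dotv g d) + eta ^+ 2 * sq d) by rewrite mulr_ge0.
have r12 : alpha / eta * (sq g + 2 * (eta * dotv g d) + eta ^+ 2 * sq d)
   = alpha / eta * sq g + 2 * alpha * dotv d g + alpha * eta * sq d.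
  by rewrite dotvC; field; rewrite lt0r_neq0.
rewrite r12 in r11.
rewrite qform1 r3 r2 r4 r5 r1.
have r13 : 0 <= alpha * eta * sq d by rewrite mulr_ge0 // mulr_ge0 // ltW.
rewrite r7 in r6.
set DG := dotv d g in r6 r11 *; set EG := dotv e g in r6 *.
have : alpha * (DG + EG) = alpha * DG + alpha * EG by ring.
rewrite !qformE -/A1 -/A2.
lra.
Qed.

End DSAHelpers.
Import DSAHelpers.
Import order.Order.TTheory.
Theorem lemma4 (R : realType) (N p : nat) (q : 'I_N -> nat)
  (edge : rel 'I_N)
  (f : forall n : 'I_N, 'I_(q n) -> 'rV[R]_p -> R)
  (gf : forall n : 'I_N, 'I_(q n) -> 'rV[R]_p -> 'rV[R]_p)
  (mu L : R) (W Wt : 'M[R]_N) (U : 'M[R]_(N * p))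
  (alpha eta : R) (x0 : 'rV[R]_(N * p))
  (xs : 'rV[R]_p) (vstar : 'rV[R]_(N * p)) :
  (* the network: a connected undirected graph *)
  irreflexive edge -> symmetric edge -> (forall n m, connect edge n m) ->
  (* every node holds at least one function *)
  (forall n, (0 < q n)%N) ->
  (* f_{n,i} differentiable, mu-strongly convex, L-Lipschitz gradient *)
  0 < mu -> 0 < L ->
  (forall n i, is_gradient (f n i) (gf n i)) ->
  (forall n i, eucl_strongly_convex mu (f n i)) ->
  (forall n i, eucl_lipschitz L (gf n i)) ->
  (* sparsity pattern of the weights *)
  (forall n m, W n m != 0 -> n = m \/ edge n m) ->
  (forall n m, Wt n m != 0 -> n = m \/ edge n m) ->
  (* (a) symmetry *)
  W^T = W -> Wt^T = Wt ->
  (* (b) null spaces *)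
  (forall z, spanOne z -> nullsp (1%:M - Wt) z) ->
  (forall z, nullsp (1%:M - W) z <-> spanOne z) ->
  (forall z, nullsp (Wt - W) z <-> spanOne z) ->
  (* (c) W <= Wt <= (I + W)/2, Wt > 0 *)
  psd_le W Wt -> psd_le Wt (2%:R^-1 *: (1%:M + W)) -> pos_def Wt ->
  (* U = (Zt - Z)^{1/2}: the symmetric positive semidefinite square root *)
  U^T = U -> (forall z, 0 <= qform U z) -> U *m U = Ztmat p Wt - Zmat p W ->
  0 < alpha -> 0 < eta ->
  (* xs is the minimizer of sum_n f_n *)
  (forall z, \sum_(n < N) f_loc f n xs <= \sum_(n < N) f_loc f n z) ->
  (* vstar lies in the column space of U and alpha grad f(xstar) + U vstar = 0 *)
  (exists w, vstar = w *m U) ->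
  alpha *: gradF_glob gf (stack (fun _ => xs)) + vstar *m U = 0 ->
  let xstar := stack (fun _ : 'I_N => xs) in
  let Z := Zmat p W in
  let Zt := Ztmat p Wt in
  let G := Gmat Zt in
  let x := dsa_x gf W Wt alpha x0 in
  let v := dsa_v gf W Wt alpha x0 U in
  let ustar := uvec xstar vstar in
  forall (omega : nat -> choice_t q) (t : nat),
    condE t (fun w => qform G (uvec (x w t.+1) (v w t.+1) - ustar)) omega
    <= qform G (uvec (x omega t) (v omega t) - ustar)
       - 2 * condE t (fun w => qform (1%:M + Z - 2%:R *: Zt) (x w t.+1 - xstar)) omega
       + 4%:R * alpha * L / eta * pterm f gf (dsa_y gf W Wt alpha x0 omega t) xs
       - condE t (fun w => qform (Zt - (2%:R * alpha * eta) *: 1%:M) (x w t.+1 - x w t)) omega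
       - condE t (fun w => qform 1%:M (v w t.+1 - v w t)) omega
       - (4%:R * alpha * mu / L - 2%:R * alpha * (2%:R * L - mu) / eta)
         * (F_glob f (x omega t) - F_glob f xstar
            - dotv (gradF_glob gf xstar) (x omega t - xstar)).

Proof.
move=> Hirr Hsym Hconn Hq mu0 L0 Hg Hc Hl _ _ WT WtT HWt1 HW HWtW Hle1 Hle2 Hpd UT Ups UU al0 et0
  Hmin [w0 Hv] Hstar xstar Z Zt G x v ustar omega t.
have W1 := colsum1 WT (fun z Hz => (HW z).2 Hz).
have Wt1 := colsum1 WtT HWt1.
have xZ : xstar *m Z = xstar := stack_const_mul xs W1.
have xZt : xstar *m Zt = xstar := stack_const_mul xs Wt1.
have ZtT : Zt^T = Zt := @tens_sym R N p Wt WtT.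
have xU : xstar *m U = 0 := U_kills UT UU xZt xZ.
have Hgs : alpha *: gradF_glob gf xstar = - (vstar *m U).
  by apply/eqP; rewrite -addr_eq0; apply/eqP.
set xt := x omega t; set vt := v omega t; set yt := dsa_y gf W Wt alpha x0 omega t.
pose wc (c : choice_t q) := fun s => if s == t then c else omega s.
have Hdep : forall c s, (s <= t)%N -> dsa gf W Wt alpha x0 (wc c) s = dsa gf W Wt alpha x0 omega s.
  move=> c s st; apply: dsa_dep => s' s's; rewrite /wc ifN //.
  by rewrite neq_ltn (leq_trans s's st).
have Hx : forall c s, (s <= t)%N -> dsa_x gf W Wt alpha x0 (wc c) s = dsa_x gf W Wt alpha x0 omega s.
  by move=> c s st; rewrite /dsa_x Hdep.
have Hvs : forall c, v (wc c) t = vt.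
  by move=> c; rewrite /v /dsa_v; apply: eq_bigr => s _; rewrite Hx // -ltnS.
have HvtU : vt *m U = (\sum_(s < t.+1) x omega s) *m (Zt - Z).
  by rewrite /vt /v /dsa_v -UU !mulmx_suml; apply: eq_bigr => s _; rewrite mulmxA.
pose X1 c := xt *m Zt - vt *m U - alpha *: ghat gf yt xt c.
have HX1 : forall c, x (wc c) t.+1 = X1 c.
  move=> c; rewrite /x dsa_rec /Gt /X1 HvtU.
  rewrite Hx // (eq_bigr (fun s : 'I_t.+1 => x omega s)); last by move=> s _; rewrite Hx // -ltnS.
  have -> : wc c t = c by rewrite /wc eqxx.
  by rewrite /dsa_y Hdep.
have HV1 : forall c, v (wc c) t.+1 = vt + X1 c *m U.
  move=> c; rewrite /v /dsa_v big_ord_recr /=; congr (_ + _); last by rewrite -HX1.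
  by apply: eq_bigr => s _; rewrite Hx // -ltnS.
set card := (#|{: choice_t q}|%:R : R)^-1.
have condEq : forall (F : (nat -> choice_t q) -> R) (g : choice_t q -> R),
    (forall c, F (wc c) = g c) -> condE t F omega = card * \sum_c g c.
  by move=> F g H; rewrite /condE; congr (_ * _); apply: eq_bigr => c _; apply: H.
rewrite (condEq _ (fun c => qform G (uvec (X1 c) (vt + X1 c *m U) - ustar))); last first.
  by move=> c; rewrite HX1 HV1.
rewrite (condEq _ (fun c => qform (1%:M + Z - 2%:R *: Zt) (X1 c - xstar))); last first.
  by move=> c; rewrite HX1.
rewrite (condEq _ (fun c => qform (Zt - (2%:R * alpha * eta) *: 1%:M) (X1 c - xt))); last first.
  by move=> c; rewrite HX1 /x Hx.
rewrite (condEq _ (fun c => qform 1%:M (X1 c *m U))); last first.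
  by move=> c; rewrite HV1 Hvs addrC addKr.
have card0 : 0 <= card by rewrite /card invr_ge0 ler0n.
set gs := gradF_glob gf xstar.
pose gh c := ghat gf yt xt c.
have HPC : forall c, qform G (uvec (X1 c) (vt + X1 c *m U) - ustar) <=
    qform G (uvec xt vt - ustar) - 2 * qform (1%:M + Z - 2%:R *: Zt) (X1 c - xstar)
    - qform (Zt - (2%:R * alpha * eta) *: 1%:M) (X1 c - xt) - qform 1%:M (X1 c *m U)
    + alpha / eta * sq (gh c - gs) - 2 * alpha * dotv (xt - xstar) (gh c - gs).
  move=> c; exact: (@PC R (N * p) Zt Z U xstar vstar xt vt (X1 c) (gh c) gs alpha eta
    ZtT UT UU xZt xU al0 et0 Hgs (erefl _)).
set K := qform G (uvec xt vt - ustar).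
set EM := card * \sum_c qform (1%:M + Z - 2%:R *: Zt) (X1 c - xstar).
set ED := card * \sum_c qform (Zt - (2%:R * alpha * eta) *: 1%:M) (X1 c - xt).
set EV := card * \sum_c qform 1%:M (X1 c *m U).
set ESG := card * \sum_c sq (gh c - gs).
set EEG := card * \sum_c dotv (xt - xstar) (gh c - gs).
have H1 : card * \sum_c qform G (uvec (X1 c) (vt + X1 c *m U) - ustar) <=
    K - 2 * EM - ED - EV + alpha / eta * ESG - 2 * alpha * EEG.
  apply: le_trans (ler_wpM2l card0 (ler_sum _ (fun c _ => HPC c))) _.
  rewrite sumrB big_split /= !sumrB -!mulr_sumr.
  have EK : card * \sum_(c : choice_t q) K = K := @expect_const R N q Hq K.
  rewrite !mulrBr mulrDr !mulrBr EK /EM /ED /EV /ESG /EEG.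
  lra.
have blk_xstar : forall n, blk xstar n = xs by move=> n; rewrite /xstar blk_stack.
pose gnn n (i : 'I_(q n)) := gf n i (blk xt n) - gf n i (yt n i)
   + (q n)%:R^-1 *: \sum_j gf n j (yt n j) - (q n)%:R^-1 *: \sum_j gf n j xs.
have blk_g : forall c n, blk (gh c - gs) n = gnn n (c n).
  by move=> c n; rewrite blkB /gh /ghat /gs /gradF_glob !blk_stack.
have EGc : forall c, dotv (xt - xstar) (gh c - gs) = \sum_n dotv (blk xt n - xs) (gnn n (c n)).
  by move=> c; rewrite dotv_blk; apply: eq_bigr => n _; rewrite blk_g blkB blk_xstar.
have SGc : forall c, sq (gh c - gs) = \sum_n sq (gnn n (c n)).
  by move=> c; rewrite /sq dotv_blk; apply: eq_bigr => n _; rewrite blk_g.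
have EEGe : EEG = \sum_n (q n)%:R^-1 * \sum_i dotv (blk xt n - xs) (gnn n i).
  rewrite /EEG (eq_bigr _ (fun c _ => EGc c)).
  exact: (@expect_sum R N q Hq (fun n i => dotv (blk xt n - xs) (gnn n i))).
have ESGe : ESG = \sum_n (q n)%:R^-1 * \sum_i sq (gnn n i).
  rewrite /ESG (eq_bigr _ (fun c _ => SGc c)).
  exact: (@expect_sum R N q Hq (fun n i => sq (gnn n i))).
pose Dn n := (q n)%:R^-1 * \sum_i Dh (f n i) (gf n i) (blk xt n) xs.
have Dge : F_glob f xt - F_glob f xstar - dotv gs (xt - xstar) = \sum_n Dn n.
  rewrite /F_glob dotv_blk -!sumrB; apply: eq_bigr => n _.
  rewrite /f_loc blk_xstar /gs /gradF_glob blk_stack blk_xstar blkB blk_xstar dotvZl dotv_suml.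
  by rewrite /Dn -mulrBr -mulrBr -sumrB -sumrB.
have Pe : pterm f gf yt xs = \sum_n (q n)%:R^-1 * \sum_i Dh (f n i) (gf n i) (yt n i) xs by [].
have HEEG : (2 * mu / L) * \sum_n Dn n <= EEG.
  rewrite EEGe mulr_sumr; apply: ler_sum => n _.
  exact: (NodeM (Hq n) mu0 L0 (Hg n) (Hc n) (Hl n) (blk xt n) xs (yt n)).
have HESG : ESG <= 4 * L * pterm f gf yt xs + 2 * (2 * L - mu) * \sum_n Dn n.
  rewrite ESGe Pe !mulr_sumr -big_split; apply: ler_sum => n _.
  exact: (NodeV (Hq n) mu0 L0 (Hg n) (Hc n) (Hl n) (blk xt n) xs (yt n)).
have ae : 0 <= alpha / eta by rewrite divr_ge0 // ltW.
have a1 := ler_wpM2l ae HESG.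
have a2 : 0 <= 2 * alpha by rewrite mulr_ge0 // ltW.
have a3 := ler_wpM2l a2 HEEG.
have E : alpha / eta * (4 * L * pterm f gf yt xs + 2 * (2 * L - mu) * \sum_n Dn n)
   - 2 * alpha * (2 * mu / L * \sum_n Dn n)
   = 4 * alpha * L / eta * pterm f gf yt xs
     - (4 * alpha * mu / L - 2 * alpha * (2 * L - mu) / eta) * \sum_n Dn n by ring.
rewrite Dge; lra.
Qed.
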